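(* Let $d\geqslant2$ and let $\mathcal{D}\subseteq\mathbb{Z}^d$ be the set of all vectors $(\epsilon_1n,\dots,\epsilon_dn)$ with $n\in\mathbb{Z}$ and $\epsilon_1,\dots,\epsilon_d\in\{1,-1\}$. Then $\mathcal{D}$ is not eventually periodic (with respect to any choice of periods $u_1,\dots,u_d$). Moreover, for each $1\leqslant i\leqslant d$, the set $\mathcal{H}_i=\{(x_1,\dots,x_d)\in\mathbb{Z}^d:x_i=0\}$ is a minimal complement of $\mathcal{D}$ in $\mathbb{Z}^d$.
   Context: $\mathbb{N}=\{0,1,2,\dots\}$. Given $u_1,\dots,u_d\in\mathbb{Z}^d$ satisfying no nontrivial $\mathbb{Z}$-linear relation and $P=\mathbb{N}u_1+\dots+\mathbb{N}u_d$, a nonempty $X\subseteq\mathbb{Z}^d$ is eventually periodic with periods $u_1,\dots,u_d$ if $X\subseteq F+P$ for some nonempty finite $F\subseteq\mathbb{Z}^d$ and $x+P\subseteq X$ for all but finitely many $x\in X$. A nonempty $M\subseteq\mathbb{Z}^d$ is a complement of $W$ if $M+W=\mathbb{Z}^d$, and a minimal complement if no proper subset of $M$ is a complement of $W$. *)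

(* Defs.v *)
From mathcomp Require Import all_boot all_order all_algebra.
Set Implicit Arguments. Unset Strict Implicit. Unset Printing Implicit Defensive.
Import Order.TTheory GRing.Theory Num.Theory.
Local Open Scope ring_scope.

Definition Zvec (d : nat) := 'rV[int]_d.
Definition Zset (d : nat) := Zvec d -> Prop.

Definition no_Z_relation (d : nat) (u : 'I_d -> Zvec d) : Prop :=
  forall c : 'I_d -> int, \sum_(i < d) u i *~ c i = 0 -> forall i, c i = 0.

Definition cone (d : nat) (u : 'I_d -> Zvec d) : Zset d :=
  fun x => exists k : 'I_d -> nat, x = \sum_(i < d) u i *+ k i.

Definition eventually_periodic (d : nat) (u : 'I_d -> Zvec d) (X : Zset d) : Prop :=
  (exists x, X x) /\
  (exists F : seq (Zvec d), F != [::] /\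
     forall x, X x -> exists2 f, f \in F & exists2 p, cone u p & x = f + p) /\
  (exists E : seq (Zvec d),
     forall x, X x -> x \notin E -> forall p, cone u p -> X (x + p)).

Definition is_complement (d : nat) (M W : Zset d) : Prop :=
  (exists x, M x) /\
  forall z : Zvec d, exists m w, [/\ M m, W w & z = m + w].

Definition minimal_complement (d : nat) (M W : Zset d) : Prop :=
  is_complement M W /\
  forall M' : Zset d, (forall x, M' x -> M x) -> is_complement M' W ->
    forall x, M x -> M' x.

Definition Dset (d : nat) : Zset d :=
  fun x => exists (n : int) (eps : 'I_d -> int),
    (forall i, eps i = 1 \/ eps i = -1) /\ forall i, x 0 i = eps i * n.

Definition Hset (d : nat) (i : 'I_d) : Zset d := fun x => x 0 i = 0.

(* Main.v *)
Require Import Defs.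
From mathcomp Require Import all_boot all_order all_algebra ring.
Import Order.TTheory GRing.Theory Num.Theory.
Set Implicit Arguments. Unset Strict Implicit. Unset Printing Implicit Defensive.
Local Open Scope ring_scope.
Lemma l1 (a b c e : int) : a^+2 = c^+2 -> (a+b)^+2 = (c+e)^+2 -> (a+b*+2)^+2 = (c+e*+2)^+2 -> b^+2 = e^+2.
Proof. move=> h0 h1 h2.
have H : (b^+2 - e^+2) *+ 2 = ((a+b*+2)^+2 - (c+e*+2)^+2) - ((a+b)^+2 - (c+e)^+2)*+2 + (a^+2 - c^+2) by ring.
have : (b^+2 - e^+2) *+ 2 = 0.
  rewrite H h0 h1 h2; ring.
by move/eqP; rewrite mulrn_eq0 /= subr_eq0 => /eqP.
Qed.
Lemma l2 (a b c e : int) : a^+2 = c^+2 -> b^+2 = e^+2 -> (a+b)^+2 = (c+e)^+2 -> a * e = b * c.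
Proof. move=> h0 h1 h2.
have H : (a*b - c*e) *+ 2 = ((a+b)^+2 - (c+e)^+2) - (a^+2 - c^+2) - (b^+2 - e^+2) by ring.
have : (a*b - c*e) *+ 2 = 0.
  rewrite H h0 h1 h2; ring.
move/eqP; rewrite mulrn_eq0 /= subr_eq0 => /eqP hab.
have H2 : (a*e - b*c)^+2 = (a^+2 - c^+2) * e^+2 + c^+2 * (b^+2 - e^+2) - (a*b - c*e) * (c*e) *+ 2 by ring.
have : (a*e - b*c)^+2 = 0.
  rewrite H2 h0 h1 hab; ring.
by move/eqP; rewrite sqrf_eq0 subr_eq0 => /eqP.
Qed.

Lemma entryD (d : nat) (x v : Zvec d) (k : nat) j : (x + v *+ k) 0 j = x 0 j + v 0 j *+ k.
Proof. by rewrite -scaler_nat !mxE mulr_natl. Qed.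

Lemma entryZ (d : nat) (v : Zvec d) (z : int) j : (v *~ z) 0 j = v 0 j * z.
Proof. by rewrite -scaler_int !mxE mulrC intz. Qed.

Lemma D_sq (d : nat) (y : Zvec d) : Dset y -> forall j j', y 0 j ^+ 2 = y 0 j' ^+ 2.
Proof.
move=> [n [eps [he hy]]] j j'; rewrite !hy !exprMn.
have s : forall i, eps i ^+ 2 = 1 by move=> i; case: (he i) => ->.
by rewrite !s.
Qed.

Lemma coneD (d : nat) (u : 'I_d -> Zvec d) p q : cone u p -> cone u q -> cone u (p + q).
Proof.
move=> [k1 ->] [k2 ->]; exists (fun i => (k1 i + k2 i)%N).
by rewrite -big_split /=; apply: eq_bigr => i _; rewrite mulrnDr.
Qed.

Lemma cone1 (d : nat) (u : 'I_d -> Zvec d) i (k : nat) : cone u (u i *+ k).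
Proof.
exists (fun j => if j == i then k else 0%N).
rewrite (bigD1 i) //= eqxx big1 ?addr0 // => j /negbTE ->; by rewrite mulr0n.
Qed.

Lemma sum2 (d : nat) (u : 'I_d -> Zvec d) i0 i1 (a b : int) : i1 != i0 ->
  \sum_(i < d) u i *~ (if i == i0 then a else if i == i1 then b else 0) = u i0 *~ a + u i1 *~ b.
Proof.
move=> h.
rewrite (bigD1 i0) //= eqxx (bigD1 i1) //= (negbTE h) eqxx big1 ?addr0 //.
by move=> i /andP [/negbTE -> /negbTE ->]; rewrite mulr0z.
Qed.

Lemma bound_seq (d : nat) (E : seq (Zvec d)) j : exists N : int, forall e, e \in E -> e 0 j < N.
Proof.
elim: E => [|e E [N HN]]; first by exists 0.
exists (Num.max N (e 0 j + 1)) => f; rewrite inE => /orP [/eqP -> | /HN h].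
  by rewrite lt_max ltrDl ltr01 orbT.
by rewrite lt_max h.
Qed.

Theorem proposition6p1 (d : nat) (hd : (2 <= d)%N) :
  (forall u : 'I_d -> Zvec d, no_Z_relation u -> ~ eventually_periodic u (@Dset d)) /\
  (forall i : 'I_d, minimal_complement (Hset i) (@Dset d)).
Proof.
split.
- move=> u hrel [_ [_ [E hE]]].
  have h0d : (0 < d)%N by apply: leq_trans hd.
  pose i0 := Ordinal h0d. pose i1 := Ordinal hd.
  have [N HN] := bound_seq E i0.
  pose x : Zvec d := const_mx N.
  have hx : Dset x.
    by exists N, (fun _ => 1); split => [i|i]; [left | rewrite mxE mul1r].
  have hxE : x \notin E.
    by apply/negP => /HN; rewrite mxE ltxx.
  have key : forall v : Zvec d, (forall k, cone u (v *+ k)) -> forall j, v 0 j ^+ 2 = v 0 i0 ^+ 2.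
    move=> v hv j.
    have hk : forall k : nat, (x 0 j + v 0 j *+ k) ^+ 2 = (x 0 i0 + v 0 i0 *+ k) ^+ 2.
      by move=> k; rewrite -!entryD; apply: D_sq; apply: hE.
    have h0 := hk 0%N; rewrite !mulr0n !addr0 in h0.
    have h1 := hk 1%N; rewrite !mulr1n in h1.
    exact: (l1 h0 h1 (hk 2%N)).
  pose A := u i0. pose B := u i1.
  have hA := key A (cone1 u i0).
  have hB := key B (cone1 u i1).
  have hAB : forall j, (A + B) 0 j ^+ 2 = (A + B) 0 i0 ^+ 2.
    by apply: key => k; rewrite mulrnDl; apply: coneD; apply: cone1.
  have hne : i1 != i0 by [].
  have rel : forall j, A 0 j * B 0 i0 = B 0 j * A 0 i0.
    move=> j; apply: l2; [exact: hA | exact: hB |].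
    by have := hAB j; rewrite !mxE.
  have hc := hrel (fun i => if i == i0 then B 0 i0 else if i == i1 then - A 0 i0 else 0).
  rewrite sum2 // in hc.
  have hsum : u i0 *~ B 0 i0 + u i1 *~ - A 0 i0 = 0.
    apply/matrixP => a j; rewrite (ord1 a) !mxE !entryZ.
    by rewrite mulrN rel subrr.
  have hB0 := hc hsum i0; rewrite eqxx /= in hB0.
  have hA0 := hc hsum i1; rewrite (negbTE hne) eqxx in hA0.
  have hA0' : A 0 i0 = 0 by apply/eqP; rewrite -oppr_eq0 hA0.
  have Az : A = 0.
    apply/matrixP => a j; rewrite (ord1 a) mxE.
    by apply/eqP; rewrite -sqrf_eq0 hA hA0' expr0n.
  have hc2 := hrel (fun i => if i == i0 then 1 else if i == i1 then 0 else 0).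
  rewrite sum2 // -/A Az mul0rz mulr0z addr0 in hc2.
  by have := hc2 erefl i0; rewrite eqxx.
- move=> i; split.
    split; first by exists 0; rewrite /Hset mxE.
    move=> z; exists (z - const_mx (z 0 i)), (const_mx (z 0 i)); split.
    + by rewrite /Hset !mxE subrr.
    + by exists (z 0 i), (fun _ => 1); split => [j|j]; [left | rewrite mxE mul1r].
    + by rewrite subrK.
  move=> M' hsub [_ hc] x hx.
  have [m [w [hm [n [eps [he hw]]] hxm]]] := hc x.
  have hmi := hsub _ hm; rewrite /Hset in hmi hx.
  have hwi : w 0 i = 0.
    by move: hx; rewrite hxm mxE hmi add0r.
  have n0 : n = 0.
    move: hwi; rewrite hw; case: (he i) => ->; rewrite ?mul1r ?mulN1r //.
    by move/eqP; rewrite oppr_eq0 => /eqP.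
  have -> : x = m; last by [].
  rewrite hxm; suff -> : w = 0 by rewrite addr0.
  by apply/matrixP => a j; rewrite (ord1 a) hw n0 mulr0 mxE.
Qed.
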